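(* Let $T$ be a tree on $n\ge 2$ vertices, let $k\ge 2$, and let $M$ be the order-$k$ Steiner distance hypermatrix of $T$. For any vector $\mathbf{c}\in\mathbb{R}^n$ write $C=\mathbf{c}^T\mathbb{J}=\sum_{i=1}^n c_i$ and, for each edge $e\in E(T)$, $\alpha_e=\mathbf{c}^T\mathbf{a}_e=\sum_{i\in A(e)}c_i$. Then $$M(\mathbf{c},\ldots,\mathbf{c})=\sum_{e\in E(T)}\left(C^k-\alpha_e^k-(C-\alpha_e)^k\right).$$
   Context: $T$ is a tree with vertex set $\{1,\dots,n\}$ and edge set $E(T)$. For $U\subseteq V(T)$, the Steiner distance $S(U)$ is the minimum number of edges of a connected subgraph of $T$ whose vertex set contains $U$. The order-$k$ Steiner distance hypermatrix $M$ of $T$ has entries $M_{(i_1,\dots,i_k)}=S(\{i_1,\dots,i_k\})$ for $(i_1,\dots,i_k)\in V(T)^k$, and for vectors $\mathbf{x}_1,\dots,\mathbf{x}_k\in\mathbb{R}^n$ one writes $M(\mathbf{x}_1,\dots,\mathbf{x}_k)=\sum_{\mathbf{i}\in V(T)^k}M_{\mathbf{i}}\prod_{j=1}^k x_{j i_j}$, where $x_{ji}$ is the $i$-th component of $\mathbf{x}_j$. For an edge $e$, $A(e)$ and $B(e)$ are the vertex sets of the two components of $T-e$ (labeled arbitrarily), and $\mathbf{a}_e\in\mathbb{R}^n$ is the indicator vector of $A(e)$. $\mathbb{J}$ denotes the all-ones vector in $\mathbb{R}^n$. *)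

(* Defs.v *)
From HB Require Import structures.
From mathcomp Require Import all_boot all_order all_algebra.
Set Implicit Arguments. Unset Strict Implicit. Unset Printing Implicit Defensive.
Import Order.TTheory GRing.Theory Num.Theory.

(* A simple graph on the vertex set 'I_n (= {0,...,n-1}, standing for {1,...,n})
   is given by an adjacency relation adj : rel 'I_n. *)

Definition is_simple_graph (n : nat) (adj : rel 'I_n) : Prop :=
  irreflexive adj /\ symmetric adj.

Definition edges (n : nat) (adj : rel 'I_n) : {set {set 'I_n}} :=
  [set [set x; y] | x in 'I_n, y in 'I_n & adj x y].

Definition connected_graph (n : nat) (adj : rel 'I_n) : Prop :=
  forall x y : 'I_n, connect adj x y.

Definition acyclic (n : nat) (adj : rel 'I_n) : Prop :=
  forall c : seq 'I_n, 3 <= size c -> uniq c -> ~~ cycle adj c.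

Definition is_tree (n : nat) (adj : rel 'I_n) : Prop :=
  is_simple_graph adj /\ connected_graph adj /\ acyclic adj.

Definition conn_subgraph_containing (n : nat) (adj : rel 'I_n)
    (U : {set 'I_n}) (p : {set 'I_n} * {set {set 'I_n}}) : bool :=
  let W := p.1 in let F := p.2 in
  [&& U \subset W, F \subset edges adj,
      [forall f in F, f \subset W] &
      [forall x in W, forall y in W,
          connect (fun u v => [set u; v] \in F) x y]].

(* Steiner distance S(U): minimum number of edges of a connected subgraph of
   the graph whose vertex set contains U.  (The default value #|E(T)| of the
   min is attained by the whole tree, which is always feasible.) *)
Definition steiner (n : nat) (adj : rel 'I_n) (U : {set 'I_n}) : nat :=
  \big[minn/#|edges adj|]_(p | conn_subgraph_containing adj U p) #|p.2|.

Definition steiner_form (R : ringType) (n k : nat) (adj : rel 'I_n)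
    (c : 'I_n -> R) : R :=
  \sum_(i : {ffun 'I_k -> 'I_n})
     ((steiner adj [set i j | j : 'I_k])%:R * \prod_(j < k) c (i j))%R.

Definition remove_edge (n : nat) (adj : rel 'I_n) (f : {set 'I_n}) : rel 'I_n :=
  fun x y => adj x y && ([set x; y] != f).

(* A is a valid labelling of the components: for each edge f, A f is the
   vertex set of one of the two components of T - f (the component of one of
   the endpoints of f). *)
Definition side_labelling (n : nat) (adj : rel 'I_n)
    (A : {set 'I_n} -> {set 'I_n}) : Prop :=
  forall f, f \in edges adj ->
    exists2 x, x \in f & A f = [set y | connect (remove_edge adj f) x y].

(* Main.v *)
Require Import Defs.
From HB Require Import structures.
From mathcomp Require Import all_boot all_order all_algebra.
Import Order.TTheory GRing.Theory Num.Theory.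
Local Open Scope ring_scope.
From Stdlib Require Import Classical.
From mathcomp Require Import ring.

Local Close Scope ring_scope.
Set Implicit Arguments. Unset Strict Implicit.
Lemma set2_eq (T : finType) (y z a b : T) :
  [set y; z] = [set a; b] -> a != b -> (y = a /\ z = b) \/ (y = b /\ z = a).
Proof.
move=> E ab.
have ya : y \in [set a; b] by rewrite -E set21.
have za : z \in [set a; b] by rewrite -E set22.
have ay : a \in [set y; z] by rewrite E set21.
have by_ : b \in [set y; z] by rewrite E set22.
move: ya za ay by_; rewrite !inE.
case/orP=>/eqP-> ; case/orP=>/eqP->.
- by rewrite !orbb => _ /eqP eba; rewrite eba eqxx in ab.
- by left.
- by right.
- by rewrite !orbb => /eqP eab; rewrite eab eqxx in ab.
Qed.

Lemma edge_adj n (adj : rel 'I_n) y z :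
  is_simple_graph adj -> [set y; z] \in edges adj -> adj y z.
Proof.
move=> [irr sym] /imset2P[a b _]; rewrite inE => ab E.
have nab : a != b by apply/eqP=> eab; rewrite eab irr in ab.
by case: (set2_eq E nab) => [[-> ->]|[-> ->]] //; rewrite sym.
Qed.

Lemma adj_edge n (adj : rel 'I_n) y z : adj y z -> [set y; z] \in edges adj.
Proof. by move=> a; apply/imset2P; apply: (Imset2spec (x1 := y) (x2 := z)) => //; rewrite inE. Qed.

Lemma remove_sym n (adj : rel 'I_n) g : symmetric adj -> symmetric (remove_edge adj g).
Proof. by move=> sym x y; rewrite /remove_edge sym setUC. Qed.

Lemma path_remove n (adj : rel 'I_n) s t w x q :
  w \in [set s; t] -> w \notin x :: q -> path adj x q -> path (remove_edge adj [set s; t]) x q.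
Proof.
move=> wst wq; apply: (@sub_in_path _ (predC1 w)).
- move=> y z /= yw zw ayz; rewrite /remove_edge ayz /=.
  apply/eqP=> E; move: wst; rewrite -E !inE.
  by case/orP=> /eqP eq; [move: yw|move: zw]; rewrite inE /= eq eqxx.
- by apply/allP=> y yq /=; apply/eqP=> eyw; rewrite -eyw yq in wq.
Qed.

Lemma path_of_steps (T : eqType) (r : rel T) x q :
  (forall p1 s t p2, x :: q = p1 ++ s :: t :: p2 -> r s t) -> path r x q.
Proof.
elim: q x => [//|y q IH] x H /=; apply/andP; split.
  by apply: (H [::] x y q).
by apply: IH => p1 s t p2 E; apply: (H (x :: p1)); rewrite E.
Qed.

Lemma step_adj (T : eqType) (r : rel T) x q p1 s t p2 :
  path r x q -> x :: q = p1 ++ s :: t :: p2 -> r s t.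
Proof.
move=> P E; have: sorted r (x :: q) by [].
by rewrite E sorted_cat_cons /= => /andP[_ /andP[]].
Qed.

Definition sepb n (A : {set 'I_n} -> {set 'I_n}) (g U : {set 'I_n}) :=
  ~~ (U \subset A g) && ~~ (U \subset ~: A g).
Definition Sset n (adj : rel 'I_n) (A : {set 'I_n} -> {set 'I_n}) (U : {set 'I_n}) :=
  [set g in edges adj | sepb A g U].

Lemma no_conn n (adj : rel 'I_n) s t : is_tree adj -> adj s t ->
  ~~ connect (remove_edge adj [set s; t]) s t.
Proof.
move=> [[irr sym] [_ acy]] ast; apply/negP => /connectP[p Pp Et].
case/shortenP: Pp Et => p' Pp' Up' _ Et.
have Padj : path adj s p' by apply: sub_path Pp' => a b /andP[].
have cyc : cycle adj (s :: p').
  by rewrite /= rcons_path Padj -Et sym.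
case: p' Pp' Up' Et Padj cyc => [|y [|z p'']] Pp' Up' Et Padj cyc.
- by rewrite /= in Et; rewrite -Et irr in ast.
- by move: Pp'; rewrite /= in Et; rewrite /= -Et /remove_edge eqxx andbF.
- by move: (acy _ (isT : 3 <= size [:: s, y, z & p'']) Up'); rewrite cyc.
Qed.

Lemma simple_path n (adj : rel 'I_n) u v : is_tree adj ->
  exists p, [/\ path adj u p, uniq (u :: p) & last u p = v].
Proof.
move=> [_ [con _]]; case/connectP: (con u v) => p Pp Ev.
case/shortenP: Pp Ev => p' Pp' Up' _ Ev; by exists p'.
Qed.

Lemma uniq_cat_notin (T : eqType) (a b : seq T) x :
  uniq (a ++ b) -> x \in b -> x \notin a.
Proof.
rewrite cat_uniq => /and3P[_ H _] xb; apply/negP => xa.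
by move/hasPn: H => /(_ x xb); rewrite /= xa.
Qed.

Lemma uniq_cat_notin2 (T : eqType) (a b : seq T) x :
  uniq (a ++ b) -> x \in a -> x \notin b.
Proof. by rewrite uniq_catC => U xa; apply: uniq_cat_notin U xa. Qed.

Lemma sides n (adj : rel 'I_n) A u p p1 s t p2 :
  is_tree adj -> side_labelling adj A ->
  path adj u p -> uniq (u :: p) -> u :: p = p1 ++ s :: t :: p2 ->
  (u \in A [set s; t]) != (last u p \in A [set s; t]).
Proof.
move=> tr lab Pp Up E.
have [[irr sym] _] := tr.
set g := [set s; t]; set R := remove_edge adj g.
have ast : adj s t by apply: (step_adj Pp E).
have Rsym : symmetric R by apply: remove_sym.
have nc := no_conn tr ast.
have E' : u :: p = rcons p1 s ++ t :: p2 by rewrite E cat_rcons.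
have U' : uniq (rcons p1 s ++ t :: p2) by rewrite -E'.
have c1 : connect R u s.
  have := last_rcons u p1 s.
  case Ew1 : (rcons p1 s) E' U' => [|u' q1]; first by have := size_rcons p1 s; rewrite Ew1.
  case=> eu Ep U' /= Ls; rewrite -eu in Ls U'.
  apply/connectP; exists q1; last by rewrite Ls.
  apply: (path_remove (w := t)); first by rewrite !inE eqxx orbT.
    by apply: (uniq_cat_notin U'); rewrite mem_head.
  by move: Pp; rewrite Ep cat_path => /andP[].
have c2 : connect R t (last u p).
  have Lp : last u p = last t p2.
    have -> : last u p = last s (u :: p) by [].
    by rewrite E last_cat.
  rewrite Lp; apply/connectP; exists p2 => //.
  apply: (path_remove (w := s)); first by rewrite !inE eqxx.
    by apply: (uniq_cat_notin2 U'); rewrite mem_rcons mem_head.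
  have : sorted adj (u :: p) by [].
  by rewrite E sorted_cat_cons /= => /andP[_ /andP[]].
have gE : g \in edges adj by apply: adj_edge.
case: (lab g gE) => x; rewrite !inE => /orP[] /eqP -> ->; rewrite !inE.
- rewrite -/R [connect R s u](sym_connect_sym Rsym) c1 /=; apply/negP => sv.
  move/negP: nc; apply; apply: (connect_trans sv).
  by rewrite (sym_connect_sym Rsym).
- rewrite -/R c2 /=; apply/negP => /eqP tu.
  move/negP: nc; apply; rewrite (sym_connect_sym Rsym).
  by apply: connect_trans tu c1.
Qed.

Lemma step_in_S n (adj : rel 'I_n) A (U : {set 'I_n}) u p p1 s t p2 :
  is_tree adj -> side_labelling adj A ->
  path adj u p -> uniq (u :: p) -> u \in U -> last u p \in U ->
  u :: p = p1 ++ s :: t :: p2 -> [set s; t] \in Sset adj A U.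
Proof.
move=> tr lab Pp Up uU vU E.
have sd := sides tr lab Pp Up E.
rewrite inE adj_edge /=; last exact: (step_adj Pp E).
rewrite /sepb; case uA: (u \in A [set s; t]) sd => /= vA.
- apply/andP; split; apply/subsetPn.
    by exists (last u p) => //; move: vA; case: (_ \in _).
  by exists u => //; rewrite inE uA.
- apply/andP; split; apply/subsetPn.
    by exists u => //; rewrite uA.
  by exists (last u p) => //; rewrite inE vA.
Qed.

Definition Srel n (adj : rel 'I_n) A (U : {set 'I_n}) := fun a b => [set a; b] \in Sset adj A U.

Lemma path_S n (adj : rel 'I_n) A (U : {set 'I_n}) u p :
  is_tree adj -> side_labelling adj A ->
  path adj u p -> uniq (u :: p) -> u \in U -> last u p \in U ->
  path (Srel adj A U) u p.
Proof.
move=> tr lab Pp Up uU vU; apply: path_of_steps => p1 s t p2 E.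
exact: (step_in_S tr lab Pp Up uU vU E).
Qed.

Lemma U_conn n (adj : rel 'I_n) A (U : {set 'I_n}) u v :
  is_tree adj -> side_labelling adj A -> u \in U -> v \in U ->
  connect (Srel adj A U) u v.
Proof.
move=> tr lab uU vU; have [p [Pp Up Ev]] := simple_path u v tr.
apply/connectP; exists p => //.
by apply: path_S => //; rewrite Ev.
Qed.

Lemma same_side n (adj : rel 'I_n) A g u v :
  is_tree adj -> side_labelling adj A -> g \in edges adj ->
  connect (remove_edge adj g) u v -> u \in A g -> v \in A g.
Proof.
move=> tr lab gE cuv; case: (lab g gE) => x _ ->; rewrite !inE => cxu.
exact: connect_trans cxu cuv.
Qed.

Lemma S_sub_F n (adj : rel 'I_n) A (U W : {set 'I_n}) F :
  is_tree adj -> side_labelling adj A ->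
  conn_subgraph_containing adj U (W, F) -> Sset adj A U \subset F.
Proof.
move=> tr lab /and4P[/= UW FE fW con]; have [[irr sym] _] := tr.
apply/subsetP => g; rewrite inE => /andP[gE /andP[/subsetPn[v vU vA] /subsetPn[u uU uA]]].
rewrite inE negbK in uA.
apply/negPn/negP => gF.
move/forall_inP: con => /(_ u (subsetP UW _ uU)) /forall_inP /(_ v (subsetP UW _ vU)) cuv.
have : connect (remove_edge adj g) u v.
  apply: connect_sub cuv => y z yzF; apply: connect1.
  rewrite /remove_edge (edge_adj (conj irr sym) (subsetP FE _ yzF)) /=.
  by apply/eqP => eg; rewrite -eg yzF in gF.
by move/(same_side tr lab gE)/(_ uA); rewrite (negbTE vA).
Qed.

Lemma Srel_sym n (adj : rel 'I_n) A (U : {set 'I_n}) : symmetric (Srel adj A U).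
Proof. by move=> a b; rewrite /Srel setUC. Qed.

Lemma g_sub_W n (adj : rel 'I_n) A (U : {set 'I_n}) u0 g :
  is_tree adj -> side_labelling adj A -> u0 \in U -> g \in Sset adj A U ->
  g \subset [set y | connect (Srel adj A U) u0 y].
Proof.
move=> tr lab u0U; rewrite inE => /andP[gE /andP[/subsetPn[v vU vA] /subsetPn[u uU uA]]].
rewrite inE negbK in uA.
have [p [Pp Up Ev]] := simple_path u v tr.
have [p1 [s [t [p2 [E Eg]]]]] :
    exists p1 s t p2, u :: p = p1 ++ s :: t :: p2 /\ [set s; t] = g.
  apply: NNPP => Hne.
  have : path (remove_edge adj g) u p.
    apply: path_of_steps => p1 s t p2 E.
    rewrite /remove_edge (step_adj Pp E) /=; apply/eqP => Eg.
    by apply: Hne; exists p1, s, t, p2.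
  move=> PR; have cuv : connect (remove_edge adj g) u v.
    by apply/connectP; exists p.
  by move: (same_side tr lab gE cuv uA); rewrite (negbTE vA).
have PS : path (Srel adj A U) u p by apply: path_S => //; rewrite Ev.
apply/subsetP => z; rewrite -Eg !inE => zst.
apply: connect_trans (U_conn tr lab u0U uU) _.
apply: (path_connect PS); rewrite E mem_cat.
by case/orP: zst => /eqP ->; rewrite !inE eqxx ?orbT.
Qed.

Lemma bigmin_le (T : eqType) (s : seq T) (P : pred T) (F : T -> nat) x0 j :
  j \in s -> P j -> (\big[minn/x0]_(i <- s | P i) F i <= F j)%N.
Proof.
elim: s => // a s IH; rewrite in_cons big_cons => /orP[/eqP <-|js] Pj.
  by rewrite Pj geq_minl.
case: (P a); last exact: IH.
by rewrite geq_min IH // orbT.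
Qed.

Lemma steiner_val n (adj : rel 'I_n) A (U : {set 'I_n}) :
  is_tree adj -> side_labelling adj A -> U != set0 ->
  steiner adj U = #|Sset adj A U|.
Proof.
move=> tr lab /set0Pn[u0 u0U].
apply/eqP; rewrite eqn_leq; apply/andP; split.
- set W0 := [set y | connect (Srel adj A U) u0 y].
  have feas : conn_subgraph_containing adj U (W0, Sset adj A U).
    apply/and4P; split => /=.
    + by apply/subsetP => v vU; rewrite inE; apply: U_conn.
    + by apply/subsetP => g; rewrite inE => /andP[].
    + by apply/forall_inP => g gS; apply: g_sub_W.
    + apply/forall_inP => x; rewrite inE => cx; apply/forall_inP => y; rewrite inE => cy.
      apply: connect_trans _ cy.
      by rewrite (sym_connect_sym (@Srel_sym _ adj A U)).
  rewrite /steiner.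
  exact: (bigmin_le _ _ (mem_index_enum _) feas).
- rewrite /steiner; apply: (big_rec (fun m => #|Sset adj A U| <= m)%N).
    by apply: subset_leq_card; apply/subsetP => g; rewrite inE => /andP[].
  move=> [W F] m feas IH; rewrite leq_min IH andbT /=.
  exact/subset_leq_card/(S_sub_F tr lab feas).
Qed.

Unset Implicit Arguments. Set Strict Implicit.
Local Open Scope ring_scope.
Lemma sum_sub (R : comRingType) n k (c : 'I_n -> R) (D : {set 'I_n}) :
  \sum_(i : {ffun 'I_k -> 'I_n} | [set i j | j : 'I_k] \subset D) \prod_(j < k) c (i j)
  = (\sum_(x in D) c x) ^+ k.
Proof.
rewrite -[in RHS](card_ord k) -prodr_const bigA_distr_big.
apply: eq_bigl => f; apply/subsetP/familyP => [H j|H x /imsetP[j _ ->]].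
  by apply: H; apply: imset_f.
exact: H.
Qed.


Lemma sum_sep (R : comRingType) n k (c : 'I_n -> R) (B : {set 'I_n}) : (0 < k)%N ->
  \sum_(i : {ffun 'I_k -> 'I_n} | ~~ ([set i j | j : 'I_k] \subset B) &&
                                  ~~ ([set i j | j : 'I_k] \subset ~: B))
     \prod_(j < k) c (i j)
  = (\sum_(x < n) c x) ^+ k - (\sum_(x in B) c x) ^+ k
    - (\sum_(x < n) c x - \sum_(x in B) c x) ^+ k.
Proof.
move=> k0.
have compl : \sum_(x < n) c x - \sum_(x in B) c x = \sum_(x in ~: B) c x.
  rewrite (bigID (mem B)) /= addrC addrK.
  by apply: eq_bigl => x; rewrite inE.
have tot : \sum_(i : {ffun 'I_k -> 'I_n}) \prod_(j < k) c (i j) = (\sum_(x < n) c x) ^+ k.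
  have -> : \sum_(x < n) c x = \sum_(x in [set: 'I_n]) c x by apply: eq_bigl => x; rewrite inE.
  rewrite -(@sum_sub R n k c setT); apply: eq_bigl => i; by rewrite subsetT.
rewrite compl -!sum_sub -tot.
rewrite [X in _ = X - _ - _](bigID (fun i : {ffun 'I_k -> 'I_n} => [set i j | j : 'I_k] \subset B)) /=.
rewrite [X in _ = _ + X - _ - _](bigID (fun i : {ffun 'I_k -> 'I_n} => [set i j | j : 'I_k] \subset ~: B)) /=.
have -> : \sum_(i : {ffun 'I_k -> 'I_n} | ~~ ([set i j | j : 'I_k] \subset B) &&
             ([set i j | j : 'I_k] \subset ~: B)) \prod_(j < k) c (i j)
   = \sum_(i : {ffun 'I_k -> 'I_n} | [set i j | j : 'I_k] \subset ~: B) \prod_(j < k) c (i j).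
  apply: eq_bigl => i; case H: (_ \subset ~: B); rewrite ?andbF ?andbT //.
  apply/negP => H2.
  have j0 : 'I_k := Ordinal k0.
  have : i j0 \in [set i j | j : 'I_k] by apply: imset_f.
  by move=> m; move: (subsetP H _ m) (subsetP H2 _ m); rewrite inE => /negP.
set a := \sum_(i | _ \subset B) _.
set b := \sum_(i | _ \subset ~: B) _.
set d := \sum_(i | _ && _) _.
ring.
Qed.

Theorem theorem1 (R : realFieldType) (n k : nat) (adj : rel 'I_n)
    (A : {set 'I_n} -> {set 'I_n}) (c : 'I_n -> R) :
  (2 <= n)%N -> (2 <= k)%N -> is_tree adj -> side_labelling adj A ->
  let C := \sum_(i < n) c i in
  steiner_form k adj c =
    \sum_(f in edges adj)
       (C ^+ k - (\sum_(i in A f) c i) ^+ k - (C - \sum_(i in A f) c i) ^+ k).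
Proof.
move=> n2 k2 tr lab C.
have k0 : (0 < k)%N by apply: leq_trans k2.
rewrite /steiner_form.
have E1 : forall i : {ffun 'I_k -> 'I_n},
    (steiner adj [set i j | j : 'I_k])%:R * \prod_(j < k) c (i j)
    = \sum_(g in edges adj)
        ((if sepb A g [set i j | j : 'I_k] then 1 else 0) * \prod_(j < k) c (i j)) :> R.
  move=> i; rewrite (steiner_val tr lab); last first.
    by apply/set0Pn; exists (i (Ordinal k0)); apply: imset_f.
  rewrite -mulr_suml; congr (_ * _).
  rewrite -sum1_card natr_sum -big_mkcondr /=.
  by apply: eq_bigl => g; rewrite inE.
rewrite (eq_bigr _ (fun i _ => E1 i)) exchange_big /=.
apply: eq_bigr => g _.
rewrite /C -(@sum_sep _ n k c (A g) k0) big_mkcond /=.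
by rewrite [RHS]big_mkcond /=; apply: eq_bigr => i _; rewrite /sepb; case: (_ && _); rewrite ?mul1r ?mul0r.
Qed.
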